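(* Assume conditions (C1)–(C5). Let $\zeta\in\Theta$ be $q_0$-periodic for some $q_0\in\mathbb N$, i.e. $\zeta_{k+q_0}=\zeta_k$ for all $k\in\mathbb Z$, and let $p_0=\mathrm{lcm}\{q_0,p\}/p$. Then $\varphi_\zeta(t+p_0\omega)=\varphi_\zeta(t)$ for all $t\in\mathbb T_0$.
   Context: Fix integers $m,n\ge1$ and $r\ge0$. Cells are indexed by pairs $(i,j)$, $1\le i\le m$, $1\le j\le n$. The $r$-neighbourhood of $(i,j)$ is $N_r(i,j)=\{(h,l):1\le h\le m,\ 1\le l\le n,\ \max(|h-i|,|l-j|)\le r\}$. Fix constants $a_{ij}>0$, $C^{hl}_{ij}\ge0$, and a continuous function $f:\mathbb R\to\mathbb R$. Vectors of $\mathbb R^{mn}$ are written $v=\{v_{ij}\}$, with norm $\|v\|=\max_{(i,j)}|v_{ij}|$. Time scale: $\{\theta_k\}_{k\in\mathbb Z}$ is strictly increasing, $\theta_{-1}<0<\theta_0$, and there exist $\omega>0$ and $p\in\mathbb N$ with $\theta_{k+2p}=\theta_k+\omega$ for all $k$. Set $\mathbb T_0=\bigcup_{k\in\mathbb Z}[\theta_{2k-1},\theta_{2k}]$, $\delta_k=\theta_{2k+1}-\theta_{2k}$, $\eta_k=\theta_{2k}-\theta_{2k-1}$ (both $p$-periodic in $k$), $\delta=\max_{1\le k\le p}\delta_k$. On $\mathbb T_0'=\mathbb T_0\setminus\{\theta_{2k-1}:k\in\mathbb Z\}$ define $\psi(t)=t-\sum_{0<\theta_{2k}<t}\delta_k$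 for $t\ge0$ and $\psi(t)=t+\sum_{t\le\theta_{2k}<0}\delta_k$ for $t<0$; put $s_k=\psi(\theta_{2k})$, and write $\psi(\omega):=\omega-\sum_{k=1}^p\delta_k=\sum_{k=1}^p\eta_k$. Inputs: $\Lambda\subset\mathbb R^{mn}$ is compact and $F:\Lambda\to\Lambda$ is continuous. $\Theta$ is the set of all sequences $\zeta=\{\zeta_k\}_{k\in\mathbb Z}$, $\zeta_k=\{\zeta^{ij}_k\}\in\Lambda$, with $\zeta_{k+1}=F(\zeta_k)$ for all $k\in\mathbb Z$. For $\zeta\in\Theta$, $L_{ij}(t,\zeta)=\zeta^{ij}_k$ for $t\in[\theta_{2k-1},\theta_{2k}]$. Network $(N_\zeta)$ on $\mathbb T_0$: a solution on $\mathbb T_0$ is a function continuous and (one-sidedly at endpoints) differentiable on each $[\theta_{2k-1},\theta_{2k}]$ satisfying there $x_{ij}'=-a_{ij}x_{ij}-\sum_{(h,l)\in N_r(i,j)}C^{hl}_{ij}f(x_{hl})x_{ij}+\zeta^{ij}_k$, together with $x_{ij}(\theta_{2k+1})=(1-\delta_ka_{ij})x_{ij}(\theta_{2k})-\delta_k\sum_{(h,l)\in N_r(i,j)}C^{hl}_{ij}f(x_{hl}(\theta_{2k}))x_{ij}(\theta_{2k})+\delta_k\zeta^{ij}_k$ (this is the $\Delta$-equation $x^\Delta_{ij}=-a_{ij}x_{ij}-\sum C^{hl}_{ij}f(x_{hl})x_{ij}+L_{ij}(t,\zeta)$ on $\mathbb T_0$). Let $u_{ij}(s,\tau)=e^{-a_{ij}(s-\tau)}\prod_{\nu=l}^{k}(1-\delta_\nu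 a_{ij})$ if $s_{l-1}<\tau\le s_l$, $s_k<s\le s_{k+1}$, $k\ge l$, and $u_{ij}(s,\tau)=e^{-a_{ij}(s-\tau)}$ if $s_k<\tau\le s\le s_{k+1}$. Let $\lambda_{ij}=a_{ij}-\frac1{\psi(\omega)}\sum_{\nu=0}^{p-1}\ln|1-\delta_\nu a_{ij}|$, $\lambda=\min_{(i,j)}\lambda_{ij}$. Conditions: (C1) $\delta_ka_{ij}\ne1$ for all $i,j,k$; (C2) $\lambda>0$; (C3) $\sup_{s\in\mathbb R}|f(s)|\le M_f$ for some $M_f>0$; (C4) $|f(s_1)-f(s_2)|\le L_f|s_1-s_2|$ for all $s_1,s_2$, for some $L_f>0$. Under (C1),(C2) fix positive numbers $K_{ij}$ with $|u_{ij}(s,\tau)|\le K_{ij}e^{-\lambda_{ij}(s-\tau)}$ for $s\ge\tau$. Define $\bar c=\max_{(i,j)}\big(\frac{K_{ij}}{\lambda_{ij}}+\frac{p\delta K_{ij}}{1-e^{-\lambda_{ij}\psi(\omega)}}\big)\sum_{(h,l)\in N_r(i,j)}C^{hl}_{ij}$, $M_F=\max_{\eta\in\Lambda}\|F(\eta)\|$, $H_0=\frac{M_F}{1-M_f\bar c}\max_{(i,j)}\big(\frac{K_{ij}}{\lambda_{ij}}+\frac{p\delta K_{ij}}{1-e^{-\lambda_{ij}\psi(\omega)}}\big)$. (C5) $(M_f+H_0L_f)\bar c<1$. $\varphi_\zeta$ denotes the unique solution of $(N_\zeta)$ defined on all of $\mathbb T_0$ with $\sup_{t\in\mathbb T_0}\|\varphi_\zeta(t)\|\le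 H_0$ (it exists and is unique under (C1)–(C5)). *)

(* Defs.v *)
From Stdlib Require Import Reals Lra Lia ZArith Arith List.
Import ListNotations.
Open Scope R_scope.

(** Vectors of R^{mn}: entries v i j for 1 <= i <= m, 1 <= j <= n
    (values at other indices are irrelevant and never used). *)
Definition vec := nat -> nat -> R.

Definition valid (m n i j : nat) : Prop := (1 <= i <= m)%nat /\ (1 <= j <= n)%nat.

Definition idx (m n : nat) : list (nat * nat) := list_prod (seq 1 m) (seq 1 n).

(** max / min over all (i,j) (m,n >= 1, so the seed (1,1) is itself an index). *)
Definition maxij (m n : nat) (g : nat -> nat -> R) : R :=
  fold_right Rmax (g 1%nat 1%nat) (map (fun ij => g (fst ij) (snd ij)) (idx m n)).
Definition minij (m n : nat) (g : nat -> nat -> R) : R :=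
  fold_right Rmin (g 1%nat 1%nat) (map (fun ij => g (fst ij) (snd ij)) (idx m n)).

Definition vnorm (m n : nat) (v : vec) : R := maxij m n (fun i j => Rabs (v i j)).
Definition vsub (v w : vec) : vec := fun i j => v i j - w i j.

(** (h,l) in N_r(i,j) (for valid h,l):  max(|h-i|,|l-j|) <= r *)
Definition inNb (r i j h l : nat) : bool :=
  (Nat.leb (h - i) r && Nat.leb (i - h) r && Nat.leb (l - j) r && Nat.leb (j - l) r)%bool.

Definition sumN (m n r i j : nat) (g : nat -> nat -> R) : R :=
  fold_right Rplus 0
    (map (fun hl => g (fst hl) (snd hl))
       (filter (fun hl => inNb r i j (fst hl) (snd hl)) (idx m n))).

Fixpoint sum_range (g : Z -> R) (start : Z) (cnt : nat) : R :=
  match cnt with O => 0 | S c => g start + sum_range g (start + 1)%Z c end.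
Fixpoint prod_range (g : Z -> R) (start : Z) (cnt : nat) : R :=
  match cnt with O => 1 | S c => g start * prod_range g (start + 1)%Z c end.
Fixpoint max_range (g : Z -> R) (start : Z) (cnt : nat) : R :=
  match cnt with O => g start | S c => Rmax (g start) (max_range g (start + 1)%Z c) end.

Definition dlt (theta : Z -> R) (k : Z) : R := theta (2 * k + 1)%Z - theta (2 * k)%Z.
Definition eta (theta : Z -> R) (k : Z) : R := theta (2 * k)%Z - theta (2 * k - 1)%Z.
Definition inT0 (theta : Z -> R) (t : R) : Prop :=
  exists k : Z, theta (2 * k - 1)%Z <= t <= theta (2 * k)%Z.
Definition psi_omega (theta : Z -> R) (omega : R) (p : nat) : R :=
  omega - sum_range (dlt theta) 1 p.
(** delta = max_{1<=k<=p} delta_k *)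
Definition delta_max (theta : Z -> R) (p : nat) : R := max_range (dlt theta) 1 (p - 1).

(** s_k = psi(theta_{2k}).  Since theta_{2j} > 0 iff j >= 0:
    for k >= 0, psi(theta_{2k}) = theta_{2k} - sum_{j=0}^{k-1} delta_j,
    for k < 0,  psi(theta_{2k}) = theta_{2k} + sum_{j=k}^{-1} delta_j. *)
Definition s_pt (theta : Z -> R) (k : Z) : R :=
  if (0 <=? k)%Z then theta (2 * k)%Z - sum_range (dlt theta) 0 (Z.to_nat k)
  else theta (2 * k)%Z + sum_range (dlt theta) k (Z.to_nat (- k)).

(** u_ij(s,tau) when s_k < s <= s_{k+1}, s_{l-1} < tau <= s_l, tau <= s (so l <= k+1):
    e^{-a(s-tau)} prod_{nu=l}^{k} (1 - delta_nu a)   (empty product when l = k+1). *)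
Definition u_val (theta : Z -> R) (a : R) (k l : Z) (s tau : R) : R :=
  exp (- a * (s - tau)) * prod_range (fun nu => 1 - dlt theta nu * a) l (Z.to_nat (k - l + 1)).

Definition K_bound (theta : Z -> R) (a lam K : R) : Prop :=
  forall (k l : Z) (s tau : R),
    s_pt theta k < s <= s_pt theta (k + 1) ->
    s_pt theta (l - 1) < tau <= s_pt theta l ->
    tau <= s ->
    Rabs (u_val theta a k l s tau) <= K * exp (- lam * (s - tau)).

Definition lam_of (theta : Z -> R) (omega : R) (p : nat) (a : R) : R :=
  a - / psi_omega theta omega p *
      sum_range (fun nu => ln (Rabs (1 - dlt theta nu * a))) 0 p.

Definition lamij (theta : Z -> R) (omega : R) (p : nat) (a : nat -> nat -> R) (i j : nat) : R :=
  lam_of theta omega p (a i j).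

Definition Kfac (theta : Z -> R) (omega : R) (p : nat) (a : nat -> nat -> R)
  (K : nat -> nat -> R) (i j : nat) : R :=
  K i j / lamij theta omega p a i j
  + INR p * delta_max theta p * K i j
    / (1 - exp (- lamij theta omega p a i j * psi_omega theta omega p)).

Definition cbar (m n r : nat) (theta : Z -> R) (omega : R) (p : nat)
  (a : nat -> nat -> R) (C : nat -> nat -> nat -> nat -> R) (K : nat -> nat -> R) : R :=
  maxij m n (fun i j => Kfac theta omega p a K i j * sumN m n r i j (fun h l => C i j h l)).

Definition H0 (m n r : nat) (theta : Z -> R) (omega : R) (p : nat)
  (a : nat -> nat -> R) (C : nat -> nat -> nat -> nat -> R) (K : nat -> nat -> R)
  (Mf MF : R) : R :=
  MF / (1 - Mf * cbar m n r theta omega p a C K) * maxij m n (Kfac theta omega p a K).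

Definition vopen (m n : nat) (O : vec -> Prop) : Prop :=
  forall v, O v -> exists eps, 0 < eps /\ forall w, vnorm m n (vsub w v) < eps -> O w.
Definition vcompact (m n : nat) (L : vec -> Prop) : Prop :=
  forall (I : Type) (O : I -> vec -> Prop),
    (forall i, vopen m n (O i)) ->
    (forall v, L v -> exists i, O i v) ->
    exists D : list I, forall v, L v -> exists i, In i D /\ O i v.
Definition vcont_on (m n : nat) (L : vec -> Prop) (G : vec -> vec) : Prop :=
  forall v, L v -> forall eps, 0 < eps -> exists d, 0 < d /\
    forall w, L w -> vnorm m n (vsub w v) < d -> vnorm m n (vsub (G w) (G v)) < eps.

Definition deriv_within (lo hi : R) (g : R -> R) (t d : R) : Prop :=
  forall eps, 0 < eps -> exists del, 0 < del /\
    forall h, h <> 0 -> Rabs h < del -> lo <= t + h <= hi ->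
      Rabs ((g (t + h) - g t) / h - d) < eps.

Definition is_solution (m n r : nat) (a : nat -> nat -> R) (C : nat -> nat -> nat -> nat -> R)
  (f : R -> R) (theta : Z -> R) (zeta : Z -> vec) (x : R -> vec) : Prop :=
  forall (k : Z) (i j : nat), valid m n i j ->
    (forall t, theta (2 * k - 1)%Z <= t <= theta (2 * k)%Z ->
       deriv_within (theta (2 * k - 1)%Z) (theta (2 * k)%Z) (fun s => x s i j) t
         (- a i j * x t i j
          - sumN m n r i j (fun h l => C i j h l * f (x t h l) * x t i j)
          + zeta k i j))
    /\
    x (theta (2 * k + 1)%Z) i j =
      (1 - dlt theta k * a i j) * x (theta (2 * k)%Z) i j
      - dlt theta k * sumN m n r i j
          (fun h l => C i j h l * f (x (theta (2 * k)%Z) h l) * x (theta (2 * k)%Z) i j)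
      + dlt theta k * zeta k i j.

(* Main.v *)
Require Import Defs.
From Stdlib Require Import Reals Lra Lia ZArith Arith List.
Require Coquelicot.Coquelicot.
Open Scope R_scope.

Definition clamp (lo hi r : R) := Rmax lo (Rmin hi r).

Lemma clamp_id lo hi r : lo <= r <= hi -> clamp lo hi r = r.
Proof. intros; unfold clamp, Rmax, Rmin; repeat destruct Rle_dec; lra. Qed.

Lemma clamp_in lo hi r : lo <= hi -> lo <= clamp lo hi r <= hi.
Proof. intros; unfold clamp, Rmax, Rmin; repeat destruct Rle_dec; lra. Qed.

Lemma clamp_dist lo hi r t : lo <= t <= hi -> Rabs (clamp lo hi r - t) <= Rabs (r - t).
Proof. intros; unfold clamp, Rmax, Rmin; repeat destruct Rle_dec; unfold Rabs; repeat destruct Rcase_abs; lra. Qed.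

Lemma dw_cont lo hi g t d : lo <= t <= hi -> deriv_within lo hi g t d ->
  continuity_pt (fun r => g (clamp lo hi r)) t.
Proof.
  intros Ht Hd. intros eps Heps.
  destruct (Hd 1 Rlt_0_1) as [del [Hdel H1]].
  exists (Rmin del (eps / (Rabs d + 1))). split.
  { apply Rmin_pos; auto. apply Rdiv_lt_0_compat; auto. pose proof (Rabs_pos d); lra. }
  intros x [_ Hx]. simpl in *. unfold R_dist in *.
  rewrite (clamp_id lo hi t) by lra.
  assert (Hlh : lo <= hi) by lra.
  pose proof (clamp_in lo hi x Hlh) as Hin.
  pose proof (clamp_dist lo hi x t Ht) as Hcd.
  set (c := clamp lo hi x) in *.
  destruct (Req_dec c t) as [E|E].
  { rewrite E. rewrite Rminus_diag, Rabs_R0; lra. }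
  set (h := c - t).
  assert (Hh : h <> 0) by (unfold h; lra).
  assert (Hhd : Rabs h < del) by (unfold h; pose proof (Rmin_l del (eps / (Rabs d + 1))); lra).
  assert (Hr : lo <= t + h <= hi) by (unfold h; lra).
  specialize (H1 h Hh Hhd Hr).
  replace (t + h) with c in H1 by (unfold h; lra).
  assert (Hb : Rabs (g c - g t) <= (Rabs d + 1) * Rabs h).
  { replace (g c - g t) with (((g c - g t) / h - d) * h + d * h) by (field; auto).
    eapply Rle_trans. apply Rabs_triang. rewrite !Rabs_mult.
    pose proof (Rabs_pos h). pose proof (Rabs_pos d). nra. }
  assert (Hh2 : Rabs h < eps / (Rabs d + 1)) by (unfold h; pose proof (Rmin_r del (eps / (Rabs d + 1))); lra).
  assert (Hpos : 0 < Rabs d + 1) by (pose proof (Rabs_pos d); lra).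
  apply (Rmult_lt_compat_l (Rabs d + 1)) in Hh2; auto.
  replace ((Rabs d + 1) * (eps / (Rabs d + 1))) with eps in Hh2 by (field; lra).
  lra.
Qed.

Lemma dw_lim lo hi g c d : lo < c < hi -> deriv_within lo hi g c d ->
  derivable_pt_lim (fun r => g (clamp lo hi r)) c d.
Proof.
  intros Hc Hd eps Heps.
  destruct (Hd eps Heps) as [del [Hdel H1]].
  assert (Hp : 0 < Rmin del (Rmin (c - lo) (hi - c))).
  { repeat apply Rmin_pos; lra. }
  exists (mkposreal _ Hp). intros h Hh Hhd. simpl in Hhd.
  pose proof (Rmin_l del (Rmin (c - lo) (hi - c))).
  pose proof (Rmin_r del (Rmin (c - lo) (hi - c))).
  pose proof (Rmin_l (c - lo) (hi - c)). pose proof (Rmin_r (c - lo) (hi - c)).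
  assert (Hr : lo <= c + h <= hi).
  { revert Hhd; unfold Rabs; destruct Rcase_abs; intros; lra. }
  rewrite (clamp_id lo hi c) by lra. rewrite (clamp_id lo hi (c+h)) by lra.
  apply H1; auto; lra.
Qed.

Module AuxB.
Import Coquelicot.Coquelicot.

Lemma interval_lemma lo e hi c0 Pc a lam K G (z gc : R -> R) :
  lo < e -> e <= hi -> 0 < lam ->
  (forall r, lo <= r <= hi -> deriv_within lo hi z r (- a * z r + gc r)) ->
  (forall r, lo <= r <= e -> Rabs (gc r) <= G) ->
  (forall r, lo < r <= e -> Rabs (exp (- a * (c0 - r)) * Pc) <= K * exp (- lam * (c0 - r))) ->
  Rabs (exp (- a * (c0 - e)) * Pc * z e - exp (- a * (c0 - lo)) * Pc * z lo)
   <= K * G / lam * (exp (- lam * (c0 - e)) - exp (- lam * (c0 - lo))).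
Proof.
  intros Hle Heh Hlam Hd Hg Hb.
  set (zt := fun r => z (clamp lo hi r)).
  assert (Hzt : forall r, lo <= r <= hi -> zt r = z r).
  { intros; unfold zt; rewrite clamp_id; auto. }
  assert (key : forall sg, sg = 1 \/ sg = -1 ->
     sg * (exp (- a * (c0 - e)) * Pc * zt e - exp (- a * (c0 - lo)) * Pc * zt lo)
      <= K * G / lam * (exp (- lam * (c0 - e)) - exp (- lam * (c0 - lo)))).
  { intros sg Hsg.
    set (h := fun r => K * G / lam * exp (- lam * (c0 - r)) - sg * (exp (- a * (c0 - r)) * Pc * zt r)).
    set (D := fun r => K * G * exp (- lam * (c0 - r)) - sg * (exp (- a * (c0 - r)) * Pc * gc r)).
    set (df := fun r => if Rlt_dec lo r then D r else 0).
    destruct (MVT_gen h lo e df) as [c [Hc Heq]].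
    { rewrite Rmin_left, Rmax_right by lra. intros x Hx.
      unfold df; destruct Rlt_dec; [|lra].
      apply is_derive_Reals.
      assert (Hzd : derivable_pt_lim zt x (- a * z x + gc x)).
      { apply dw_lim; [lra|]. apply Hd; lra. }
      apply is_derive_Reals in Hzd.
      unfold h, D. auto_derive.
      { repeat split; auto. exists (- a * z x + gc x); auto. }
      match goal with |- context [Derive ?f x] => replace (Derive f x) with (- a * z x + gc x) by (symmetry; apply is_derive_unique; exact Hzd) end. rewrite Hzt by lra. unfold Rminus. field. lra. }
    { rewrite Rmin_left, Rmax_right by lra. intros x Hx.
      unfold h. apply continuity_pt_minus.
      - apply continuity_pt_mult. apply continuity_pt_const; intros ? ?; auto.
        apply derivable_continuous_pt. apply ex_derive_Reals_0. auto_derive; auto.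
      - apply continuity_pt_mult. apply continuity_pt_const; intros ? ?; auto.
        apply continuity_pt_mult.
        apply derivable_continuous_pt. apply ex_derive_Reals_0. auto_derive; auto.
        unfold zt. eapply dw_cont; [|apply Hd]; lra. }
    rewrite Rmin_left, Rmax_right in Hc by lra.
    assert (Hdf : 0 <= df c).
    { unfold df; destruct Rlt_dec; [|lra]. unfold D.
      assert (Hx : Rabs (sg * (exp (- a * (c0 - c)) * Pc * gc c)) <= K * G * exp (- lam * (c0 - c))).
      { rewrite Rabs_mult. replace (Rabs sg) with 1 by (destruct Hsg; subst; unfold Rabs; destruct Rcase_abs; lra).
        rewrite Rabs_mult. specialize (Hb c ltac:(lra)). specialize (Hg c ltac:(lra)).
        pose proof (Rabs_pos (gc c)). pose proof (Rabs_pos (exp (- a * (c0 - c)) * Pc)).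
        pose proof (exp_pos (- lam * (c0 - c))). nra. }
      pose proof (Rle_abs (sg * (exp (- a * (c0 - c)) * Pc * gc c))). lra. }
    assert (0 <= h e - h lo) by (rewrite Heq; nra).
    unfold h in H. lra. }
  rewrite <- (Hzt e), <- (Hzt lo) by lra.
  pose proof (key 1 (or_introl eq_refl)). pose proof (key (-1) (or_intror eq_refl)).
  unfold Rabs; destruct Rcase_abs; lra.
Qed.

End AuxB.
Import AuxB.

Lemma sum_range_S g s c : sum_range g s (S c) = g s + sum_range g (s + 1)%Z c.
Proof. reflexivity. Qed.

Lemma sum_range_last g s c : sum_range g s (S c) = sum_range g s c + g (s + Z.of_nat c)%Z.
Proof.
  revert s; induction c; intros s.
  - simpl. replace (s + 0)%Z with s by lia. ring.
  - rewrite (sum_range_S g s (S c)), (sum_range_S g s c), IHc.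
    replace (s + 1 + Z.of_nat c)%Z with (s + Z.of_nat (S c))%Z by lia. ring.
Qed.

Lemma sum_range_ext g1 g2 s c : (forall i, g1 i = g2 i) -> sum_range g1 s c = sum_range g2 s c.
Proof. intros H; revert s; induction c; intros s; simpl; auto. rewrite H, IHc; auto. Qed.

Lemma sum_range_minus g1 g2 s c :
  sum_range (fun i => g1 i - g2 i) s c = sum_range g1 s c - sum_range g2 s c.
Proof. revert s; induction c; intros s; simpl; [ring|]. rewrite IHc; ring. Qed.

Lemma telescope (F : Z -> R) s c :
  F (s + Z.of_nat c)%Z - F s = sum_range (fun i => F (i + 1)%Z - F i) s c.
Proof.
  revert s; induction c; intros s; simpl.
  - replace (s + 0)%Z with s by lia. ring.
  - rewrite <- IHc. replace (s + 1 + Z.of_nat c)%Z with (s + Z.pos (Pos.of_succ_nat c))%Z by lia. ring.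
Qed.

Lemma sum_range_shift1 g s c : (forall i, g (i + Z.of_nat c)%Z = g i) ->
  sum_range g (s + 1)%Z c = sum_range g s c.
Proof.
  intros Hp. destruct c.
  - reflexivity.
  - rewrite sum_range_last, sum_range_S.
    replace (s + 1 + Z.of_nat c)%Z with (s + Z.of_nat (S c))%Z by lia.
    rewrite Hp. ring.
Qed.

Lemma sum_range_shift g s c : (forall i, g (i + Z.of_nat c)%Z = g i) ->
  sum_range g s c = sum_range g 0 c.
Proof.
  intros Hp. induction s using Z.peano_ind.
  - reflexivity.
  - rewrite <- IHs. rewrite <- Z.add_1_r. apply sum_range_shift1; auto.
  - rewrite <- IHs. replace s with (Z.pred s + 1)%Z at 2 by lia.
    symmetry; apply sum_range_shift1; auto.
Qed.

Section TS.
Variable theta : Z -> R.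
Variable omega : R.
Variable p : nat.
Hypothesis Hinc : forall k1 k2 : Z, (k1 < k2)%Z -> theta k1 < theta k2.
Hypothesis Hper : forall k : Z, theta (k + 2 * Z.of_nat p)%Z = theta k + omega.
Hypothesis Hp : (1 <= p)%nat.

Lemma S_succ k : s_pt theta (k + 1) - s_pt theta k = theta (2 * k + 2)%Z - theta (2 * k + 1)%Z.
Proof.
  unfold s_pt.
  destruct (Z_lt_le_dec k (-1)) as [Hk|Hk].
  - replace (0 <=? k + 1)%Z with false by (symmetry; apply Z.leb_gt; lia).
    replace (0 <=? k)%Z with false by (symmetry; apply Z.leb_gt; lia).
    replace (Z.to_nat (- k)) with (S (Z.to_nat (- (k + 1)))) by lia.
    rewrite sum_range_S. replace (2 * (k + 1))%Z with (2 * k + 2)%Z by lia.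
    unfold dlt. ring.
  - destruct (Z.eq_dec k (-1)) as [E|E].
    + subst. simpl. unfold dlt. simpl. ring.
    + replace (0 <=? k + 1)%Z with true by (symmetry; apply Z.leb_le; lia).
      replace (0 <=? k)%Z with true by (symmetry; apply Z.leb_le; lia).
      replace (Z.to_nat (k + 1)) with (S (Z.to_nat k)) by lia.
      rewrite sum_range_last. rewrite Z2Nat.id by lia. simpl (0 + k)%Z.
      replace (2 * (k + 1))%Z with (2 * k + 2)%Z by lia.
      unfold dlt. ring.
Qed.

Lemma S_lt k : s_pt theta k < s_pt theta (k + 1).
Proof. pose proof (S_succ k). pose proof (Hinc (2*k+1) (2*k+2) ltac:(lia)). lra. Qed.

Lemma S_le k1 k2 : (k1 <= k2)%Z -> s_pt theta k1 <= s_pt theta k2.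
Proof.
  intros H. replace k2 with (k1 + Z.of_nat (Z.to_nat (k2 - k1)))%Z by lia.
  induction (Z.to_nat (k2 - k1)) as [|c IH].
  - simpl. rewrite Z.add_0_r. lra.
  - replace (k1 + Z.of_nat (S c))%Z with (k1 + Z.of_nat c + 1)%Z by lia.
    pose proof (S_lt (k1 + Z.of_nat c)). lra.
Qed.

Lemma dlt_per k : dlt theta (k + Z.of_nat p) = dlt theta k.
Proof.
  unfold dlt.
  replace (2 * (k + Z.of_nat p) + 1)%Z with ((2 * k + 1) + 2 * Z.of_nat p)%Z by lia.
  replace (2 * (k + Z.of_nat p))%Z with ((2 * k) + 2 * Z.of_nat p)%Z by lia.
  rewrite !Hper. ring.
Qed.

Lemma dlt_per_mult k q : dlt theta (k + Z.of_nat p * q) = dlt theta k.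
Proof.
  induction q using Z.peano_ind.
  - rewrite Z.mul_0_r, Z.add_0_r; auto.
  - replace (k + Z.of_nat p * Z.succ q)%Z with (k + Z.of_nat p * q + Z.of_nat p)%Z by lia.
    rewrite dlt_per; auto.
  - rewrite <- IHq. replace (k + Z.of_nat p * q)%Z with (k + Z.of_nat p * Z.pred q + Z.of_nat p)%Z by lia.
    rewrite dlt_per; auto.
Qed.

Lemma S_per k : s_pt theta (k + Z.of_nat p) = s_pt theta k + psi_omega theta omega p.
Proof.
  unfold psi_omega.
  rewrite (sum_range_shift _ 1 p) by apply dlt_per.
  rewrite <- (sum_range_shift _ k p) by apply dlt_per.
  pose proof (telescope (s_pt theta) k p) as T1.
  pose proof (telescope (fun i => theta (2 * i)%Z) k p) as T2. cbv beta in T2.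
  replace (theta (2 * (k + Z.of_nat p))%Z) with (theta (2 * k)%Z + omega) in T2
    by (replace (2 * (k + Z.of_nat p))%Z with (2 * k + 2 * Z.of_nat p)%Z by lia; rewrite Hper; auto).
  assert (E1 : sum_range (fun i => s_pt theta (i + 1) - s_pt theta i) k p =
     sum_range (fun i => theta (2 * (i + 1))%Z - theta (2 * i)%Z) k p - sum_range (dlt theta) k p).
  { rewrite <- sum_range_minus. apply sum_range_ext. intros i. rewrite S_succ. unfold dlt.
    replace (2 * (i + 1))%Z with (2 * i + 2)%Z by lia. ring. }
  lra.
Qed.

Lemma dlt_pos k : 0 < dlt theta k.
Proof. unfold dlt. pose proof (Hinc (2*k) (2*k+1) ltac:(lia)). lra. Qed.

Lemma psi_pos : 0 < psi_omega theta omega p.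
Proof.
  pose proof (S_per 0). pose proof (S_lt 0).
  pose proof (S_le (0 + 1) (0 + Z.of_nat p) ltac:(lia)). lra.
Qed.

Lemma max_range_ge g s c i : (i <= c)%nat -> g (s + Z.of_nat i)%Z <= max_range g s c.
Proof.
  revert s i; induction c; intros s i Hi; simpl.
  - replace i with 0%nat by lia. rewrite Z.add_0_r. lra.
  - destruct i.
    + rewrite Z.add_0_r. apply Rmax_l.
    + eapply Rle_trans; [|apply Rmax_r].
      replace (s + Z.of_nat (S i))%Z with (s + 1 + Z.of_nat i)%Z by lia. apply IHc; lia.
Qed.

Lemma delta_max_ge k : dlt theta k <= delta_max theta p.
Proof.
  unfold delta_max.
  set (r := ((k - 1) mod Z.of_nat p)%Z).
  assert (Hr : (0 <= r < Z.of_nat p)%Z) by (apply Z.mod_pos_bound; lia).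
  replace k with ((1 + Z.of_nat (Z.to_nat r)) + Z.of_nat p * ((k - 1) / Z.of_nat p))%Z.
  2:{ rewrite Z2Nat.id by lia. unfold r. pose proof (Z.div_mod (k - 1) (Z.of_nat p) ltac:(lia)). lia. }
  rewrite dlt_per_mult. apply max_range_ge. lia.
Qed.

End TS.


Lemma lim_arg A B e0 lam : 0 < e0 -> 0 < lam -> 0 <= A ->
  (forall e, 0 < e <= e0 -> A * (1 - lam * e) <= B) -> A <= B.
Proof.
  intros He0 Hl HA H.
  destruct (Rle_dec A B) as [|Hn]; auto. exfalso.
  assert (HAB : B < A) by lra.
  assert (HA0 : 0 < A).
  { destruct HA as [|HA]; auto. subst A. specialize (H e0 ltac:(lra)). lra. }
  assert (H2 : 0 < 2 * A * lam) by (apply Rmult_lt_0_compat; lra).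
  set (e := Rmin e0 ((A - B) / (2 * A * lam))).
  assert (Hq : 0 < (A - B) / (2 * A * lam)) by (apply Rdiv_lt_0_compat; lra).
  assert (He : 0 < e <= e0) by (unfold e; split; [apply Rmin_pos; lra| apply Rmin_l]).
  specialize (H e He).
  assert (A * lam * e <= (A - B) / 2).
  { assert (e <= (A - B) / (2 * A * lam)) by (unfold e; apply Rmin_r).
    apply (Rmult_le_compat_l (A * lam)) in H0; [|apply Rmult_le_pos; lra].
    replace (A * lam * ((A - B) / (2 * A * lam))) with ((A - B) / 2) in H0 by (field; lra).
    lra. }
  nra.
Qed.

Section Core.
Variable theta : Z -> R.
Variable omega : R.
Variable p : nat.
Hypothesis Hinc : forall k1 k2 : Z, (k1 < k2)%Z -> theta k1 < theta k2.
Hypothesis Hper : forall k : Z, theta (k + 2 * Z.of_nat p)%Z = theta k + omega.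
Hypothesis Hp : (1 <= p)%nat.

Notation S := (s_pt theta).
Definition Pr (a : R) (kap l : Z) := prod_range (fun nu => 1 - dlt theta nu * a) l (Z.to_nat (kap - l + 1)).

Lemma jump_bound a lam K kap l sst :
  0 <= a -> 0 < lam -> K_bound theta a lam K ->
  S kap < sst <= S (kap + 1) -> (l <= kap + 1)%Z ->
  Rabs (exp (- a * (sst - S (l - 1))) * Pr a kap l) <= K * exp (- lam * (sst - S (l - 1))).
Proof.
  intros Ha Hl HK Hs Hlk.
  set (t0 := S (l - 1)).
  assert (Ht0 : t0 <= S kap) by (apply (S_le theta p Hinc Hp); lia).
  assert (HSl : t0 < S l) by (unfold t0; pose proof (S_lt theta p Hinc Hp (l - 1)); replace (l - 1 + 1)%Z with l in H by lia; auto).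
  apply (lim_arg _ _ (Rmin (S l - t0) (sst - t0)) lam); auto.
  { apply Rmin_pos; lra. }
  { apply Rabs_pos. }
  intros e He.
  pose proof (Rmin_l (S l - t0) (sst - t0)). pose proof (Rmin_r (S l - t0) (sst - t0)).
  assert (Hb := HK kap l sst (t0 + e) Hs ltac:(unfold t0 in *; split; lra) ltac:(lra)).
  unfold u_val in Hb. fold (Pr a kap l) in Hb.
  replace (- a * (sst - (t0 + e))) with (- a * (sst - t0) + a * e) in Hb by ring.
  replace (- lam * (sst - (t0 + e))) with (- lam * (sst - t0) + lam * e) in Hb by ring.
  rewrite !exp_plus in Hb.
  set (A := Rabs (exp (- a * (sst - t0)) * Pr a kap l)) in *.
  assert (HA : 0 <= A) by apply Rabs_pos.
  replace (Rabs (exp (- a * (sst - t0)) * exp (a * e) * Pr a kap l)) with (A * exp (a * e)) in Hb.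
  2:{ unfold A. replace (exp (- a * (sst - t0)) * exp (a * e) * Pr a kap l) with ((exp (- a * (sst - t0)) * Pr a kap l) * exp (a*e)) by ring.
      rewrite (Rabs_mult _ (exp (a*e))), (Rabs_pos_eq (exp (a*e))); [reflexivity| left; apply exp_pos]. }
  pose proof (exp_ineq1_le (a * e)). pose proof (exp_ineq1_le (- (lam * e))).
  assert (Hee : exp (lam * e) * exp (- (lam * e)) = 1) by (rewrite <- exp_plus; replace (lam * e + - (lam * e)) with 0 by ring; apply exp_0).
  pose proof (exp_pos (lam * e)). pose proof (exp_pos (- (lam * e))).
  set (B := K * exp (- lam * (sst - t0))) in *.
  assert (G1 : A <= A * exp (a * e)).
  { assert (0 <= a * e) by (apply Rmult_le_pos; lra). nra. }
  assert (G2 : A <= B * exp (lam * e)) by (replace (B * exp (lam*e)) with (K * (exp (- lam * (sst - t0)) * exp (lam * e))) by (unfold B; ring); lra).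
  assert (G3 : A * exp (- (lam * e)) <= B).
  { apply (Rmult_le_compat_r (exp (- (lam * e)))) in G2; [|lra].
    rewrite Rmult_assoc, Hee, Rmult_1_r in G2. exact G2. }
  assert (G4 : A * (1 - lam * e) <= A * exp (- (lam * e))).
  { apply Rmult_le_compat_l; lra. }
  lra.
Qed.

End Core.


Lemma sum_range_split g s c1 c2 :
  sum_range g s (c1 + c2) = sum_range g s c1 + sum_range g (s + Z.of_nat c1)%Z c2.
Proof.
  revert s; induction c1; intros s; simpl.
  - rewrite Z.add_0_r; ring.
  - rewrite IHc1. replace (s + 1 + Z.of_nat c1)%Z with (s + Z.pos (Pos.of_succ_nat c1))%Z by lia. ring.
Qed.

Lemma sum_range_shiftg g s c n :
  sum_range g (s + c)%Z n = sum_range (fun m => g (m + c)%Z) s n.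
Proof.
  revert s; induction n; intros s; simpl; auto.
  rewrite <- IHn. replace (s + c + 1)%Z with (s + 1 + c)%Z by lia. auto.
Qed.

Lemma sum_range_scal q f s n : sum_range (fun m => q * f m) s n = q * sum_range f s n.
Proof. revert s; induction n; intros s; simpl; [ring|]. rewrite IHn; ring. Qed.

Lemma sum_range_bound f s n : (forall m, (s <= m)%Z -> 0 <= f m <= 1) -> 0 <= sum_range f s n <= INR n.
Proof.
  revert s; induction n; intros s H; [simpl; lra|].
  rewrite sum_range_S, S_INR.
  specialize (IHn (s + 1)%Z ltac:(intros; apply H; lia)). specialize (H s ltac:(lia)). lra.
Qed.

Section Core2.
Variable theta : Z -> R.
Variable omega : R.
Variable p : nat.
Hypothesis Hinc : forall k1 k2 : Z, (k1 < k2)%Z -> theta k1 < theta k2.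
Hypothesis Hper : forall k : Z, theta (k + 2 * Z.of_nat p)%Z = theta k + omega.
Hypothesis Hp : (1 <= p)%nat.

Notation S := (s_pt theta).

Lemma S_prev l : S (l - 1) = theta (2 * l - 1)%Z - theta (2 * l)%Z + S l.
Proof.
  pose proof (S_succ theta p Hp (l - 1)).
  replace (l - 1 + 1)%Z with l in H by lia.
  replace (2 * (l - 1) + 2)%Z with (2 * l)%Z in H by lia.
  replace (2 * (l - 1) + 1)%Z with (2 * l - 1)%Z in H by lia. lra.
Qed.

Lemma iv a lam K G (z gc : R -> R) kap l sst e :
  0 < lam -> K_bound theta a lam K -> S kap < sst <= S (kap + 1) -> (l <= kap + 1)%Z ->
  theta (2 * l - 1)%Z < e <= theta (2 * l)%Z -> e - theta (2 * l)%Z + S l <= sst ->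
  (forall t, theta (2 * l - 1)%Z <= t <= theta (2 * l)%Z ->
     deriv_within (theta (2 * l - 1)%Z) (theta (2 * l)%Z) z t (- a * z t + gc t)) ->
  (forall t, theta (2 * l - 1)%Z <= t <= theta (2 * l)%Z -> Rabs (gc t) <= G) ->
  Rabs (exp (- a * (sst - (e - theta (2 * l)%Z + S l))) * Pr theta a kap l * z e
        - exp (- a * (sst - S (l - 1))) * Pr theta a kap l * z (theta (2 * l - 1)%Z))
  <= K * G / lam * (exp (- lam * (sst - (e - theta (2 * l)%Z + S l))) - exp (- lam * (sst - S (l - 1)))).
Proof.
  intros Hl HK Hs Hlk He Hes Hd Hg.
  pose proof (S_prev l) as Sp.
  set (c0 := sst + theta (2 * l)%Z - S l).
  replace (sst - (e - theta (2 * l)%Z + S l)) with (c0 - e) by (unfold c0; ring).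
  replace (sst - S (l - 1)) with (c0 - theta (2 * l - 1)%Z) by (unfold c0; rewrite Sp; ring).
  apply interval_lemma with (hi := theta (2 * l)%Z) (gc := gc); try lra; auto.
  - intros r Hr. apply Hg; lra.
  - intros r Hr.
    assert (Hb := HK kap l sst (r - theta (2 * l)%Z + S l) Hs ltac:(rewrite Sp; lra) ltac:(lra)).
    unfold u_val in Hb.
    replace (sst - (r - theta (2 * l)%Z + S l)) with (c0 - r) in Hb by (unfold c0; ring).
    exact Hb.
Qed.

Lemma Pr_step a kap l : (l <= kap)%Z ->
  Pr theta a kap l = (1 - dlt theta l * a) * Pr theta a kap (l + 1).
Proof.
  intros H. unfold Pr.
  replace (Z.to_nat (kap - l + 1)) with (Datatypes.S (Z.to_nat (kap - (l + 1) + 1))) by lia.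
  reflexivity.
Qed.

Lemma Pr_last a kap : Pr theta a kap (kap + 1) = 1.
Proof. unfold Pr. replace (kap - (kap + 1) + 1)%Z with 0%Z by lia. reflexivity. Qed.

End Core2.


Section Core3.
Variable theta : Z -> R.
Variable omega : R.
Variable p : nat.
Hypothesis Hinc : forall k1 k2 : Z, (k1 < k2)%Z -> theta k1 < theta k2.
Hypothesis Hper : forall k : Z, theta (k + 2 * Z.of_nat p)%Z = theta k + omega.
Hypothesis Hp : (1 <= p)%nat.

Notation S := (s_pt theta).

Variables (a lam Kc G B : R) (z gc : R -> R) (gj : Z -> R).
Hypothesis Ha : 0 < a.
Hypothesis Hl : 0 < lam.
Hypothesis HK : K_bound theta a lam Kc.
Hypothesis HKc : 0 < Kc.
Hypothesis Hd : forall k t, theta (2 * k - 1)%Z <= t <= theta (2 * k)%Z ->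
  deriv_within (theta (2 * k - 1)%Z) (theta (2 * k)%Z) z t (- a * z t + gc t).
Hypothesis Hg : forall k t, theta (2 * k - 1)%Z <= t <= theta (2 * k)%Z -> Rabs (gc t) <= G.
Hypothesis Hj : forall k, z (theta (2 * k + 1)%Z) = (1 - dlt theta k * a) * z (theta (2 * k)%Z) + dlt theta k * gj k.
Hypothesis Hgj : forall k, Rabs (gj k) <= G.
Hypothesis HB : forall t, inT0 theta t -> Rabs (z t) <= B.

Variable kap : Z.
Variable t : R.
Hypothesis Ht : theta (2 * kap + 1)%Z < t <= theta (2 * kap + 2)%Z.

Definition sst := t - theta (2 * (kap + 1))%Z + S (kap + 1).
Definition V l := exp (- a * (sst - S (l - 1))) * Pr theta a kap l * z (theta (2 * l - 1)%Z).
Definition Ef j := exp (- lam * (sst - S j)).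
Definition T N := sum_range (fun m => Ef (kap - m)) 0 N.
Definition dm := delta_max theta p.

Lemma Hs : S kap < sst <= S (kap + 1).
Proof.
  pose proof (S_succ theta p Hp kap). unfold sst.
  replace (2 * (kap + 1))%Z with (2 * kap + 2)%Z by lia. lra.
Qed.

Lemma claim N : Rabs (z t) <= Rabs (V (kap + 1 - Z.of_nat N)) + Kc * G / lam * (1 - Ef (kap - Z.of_nat N))
   + Kc * dm * G * T N.
Proof.
  induction N.
  - simpl. unfold T; simpl. rewrite Z.sub_0_r.
    assert (Hiv := iv theta p Hp a lam Kc G z gc kap (kap + 1) sst t Hl HK Hs ltac:(lia)).
    replace (2 * (kap + 1) - 1)%Z with (2 * kap + 1)%Z in Hiv by lia.
    replace (t - theta (2 * (kap + 1))%Z + S (kap + 1)) with sst in Hiv by (unfold sst; ring).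
    replace (kap + 1 - 1)%Z with kap in Hiv by lia.
    rewrite (Pr_last theta p Hp) in Hiv. rewrite Rminus_diag, Rmult_0_r, exp_0 in Hiv.
    specialize (Hiv ltac:(replace (2 * (kap + 1))%Z with (2 * kap + 2)%Z by lia; lra) ltac:(lra)).
    assert (Hd' := Hd (kap + 1)). assert (Hg' := Hg (kap + 1)).
    replace (2 * (kap + 1) - 1)%Z with (2 * kap + 1)%Z in Hd', Hg' by lia.
    specialize (Hiv Hd' Hg').
    unfold V, Ef. replace (kap + 1 - 1)%Z with kap by lia.
    replace (2 * (kap + 1) - 1)%Z with (2 * kap + 1)%Z by lia.
    rewrite Rmult_1_r in Hiv. rewrite Rmult_1_l in Hiv.
    pose proof (Rabs_triang_inv (z t) (exp (- a * (sst - S kap)) * 1 * z (theta (2 * kap + 1)%Z))).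
    rewrite (Pr_last theta p Hp). replace (kap - 0)%Z with kap by lia. rewrite Rmult_0_r, exp_0 in Hiv. lra.
  - set (l := (kap - Z.of_nat N)%Z) in *.
    replace (kap + 1 - Z.of_nat N)%Z with (l + 1)%Z in IHN by (unfold l; lia).
    replace (kap + 1 - Z.of_nat (Datatypes.S N))%Z with l by (unfold l; lia).
    replace (kap - Z.of_nat (Datatypes.S N))%Z with (l - 1)%Z by (unfold l; lia).
    assert (Hlk : (l <= kap)%Z) by (unfold l; lia).
    assert (HSl : S l <= S kap) by (apply (S_le theta p Hinc Hp); lia).
    pose proof Hs as Hs'.
    assert (Hiv := iv theta p Hp a lam Kc G z gc kap l sst (theta (2 * l)%Z) Hl HK Hs ltac:(lia)
       ltac:(pose proof (Hinc (2 * l - 1) (2 * l) ltac:(lia)); lra) ltac:(lra) (Hd l) (Hg l)).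
    replace (theta (2 * l)%Z - theta (2 * l)%Z + S l) with (S l) in Hiv by ring.
    assert (HV : V (l + 1) = exp (- a * (sst - S l)) * Pr theta a kap l * z (theta (2 * l)%Z)
              + exp (- a * (sst - S l)) * Pr theta a kap (l + 1) * (dlt theta l * gj l)).
    { unfold V. replace (l + 1 - 1)%Z with l by lia.
      replace (2 * (l + 1) - 1)%Z with (2 * l + 1)%Z by lia.
      rewrite Hj, (Pr_step theta p Hp a kap l Hlk). ring. }
    assert (Hjb := jump_bound theta p Hinc Hp a lam Kc kap (l + 1) sst ltac:(lra) Hl HK Hs ltac:(lia)).
    replace (l + 1 - 1)%Z with l in Hjb by lia.
    assert (Hjt : Rabs (exp (- a * (sst - S l)) * Pr theta a kap (l + 1) * (dlt theta l * gj l)) <= Kc * Ef l * dm * G).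
    { rewrite Rabs_mult, (Rabs_mult (dlt theta l)).
      pose proof (dlt_pos theta p Hinc Hp l). pose proof (delta_max_ge theta omega p Hper Hp l).
      rewrite (Rabs_pos_eq (dlt theta l)) by lra.
      pose proof (Hgj l). pose proof (Rabs_pos (gj l)).
      pose proof (Rabs_pos (exp (- a * (sst - S l)) * Pr theta a kap (l + 1))).
      unfold Ef, dm. fold (Ef l) in *.
      assert (0 <= Kc * Ef l) by (unfold Ef; pose proof (exp_pos (- lam * (sst - S l))); nra).
      apply Rle_trans with (Kc * Ef l * (dlt theta l * Rabs (gj l))).
      - apply Rmult_le_compat_r; [apply Rmult_le_pos; lra|]. unfold Ef. exact Hjb.
      - replace (Kc * Ef l * delta_max theta p * G) with (Kc * Ef l * (delta_max theta p * G)) by ring.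
        apply Rmult_le_compat_l; auto. apply Rmult_le_compat; lra. }
    unfold T. rewrite sum_range_last. fold (T N). simpl (0 + Z.of_nat N)%Z. fold l.
    unfold Ef in *. unfold V in Hiv.
    pose proof (Rabs_triang (exp (- a * (sst - S l)) * Pr theta a kap l * z (theta (2 * l)%Z))
                 (exp (- a * (sst - S l)) * Pr theta a kap (l + 1) * (dlt theta l * gj l))).
    rewrite <- HV in H.
    pose proof (Rabs_triang_inv (exp (- a * (sst - S l)) * Pr theta a kap l * z (theta (2 * l)%Z)) (V l)).
    unfold V in H0 |- *.
    lra.
Qed.


Definition q := exp (- lam * psi_omega theta omega p).

Lemma q_range : 0 < q < 1.
Proof.
  unfold q. split; [apply exp_pos|].
  pose proof (psi_pos theta omega p Hinc Hper Hp).
  rewrite <- exp_0. apply exp_increasing. nra.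
Qed.

Lemma Ef_per j : Ef (j - Z.of_nat p) = q * Ef j.
Proof.
  unfold Ef, q. rewrite <- exp_plus. f_equal.
  pose proof (S_per theta omega p Hper Hp (j - Z.of_nat p)).
  replace (j - Z.of_nat p + Z.of_nat p)%Z with j in H by lia.
  rewrite H. ring.
Qed.

Lemma Ef_le1 j : (j <= kap)%Z -> 0 <= Ef j <= 1.
Proof.
  intros H. unfold Ef. split; [left; apply exp_pos|].
  pose proof (S_le theta p Hinc Hp j kap H). pose proof Hs.
  rewrite <- exp_0. destruct (Req_dec (- lam * (sst - S j)) 0) as [E|E]; [rewrite E; lra|].
  left; apply exp_increasing. nra.
Qed.

Lemma T_bound N : T N <= INR p / (1 - q).
Proof.
  pose proof q_range as Hq.
  assert (HX : INR p <= INR p / (1 - q)).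
  { pose proof (pos_INR p). unfold Rdiv.
    assert (1 <= / (1 - q)).
    { rewrite <- Rinv_1. apply Rinv_le_contravar; lra. }
    nra. }
  assert (Hb : forall N', T N' <= INR N').
  { intros N'. unfold T. apply sum_range_bound. intros m Hm. apply Ef_le1. lia. }
  induction N as [N IH] using lt_wf_ind.
  destruct (Nat.lt_ge_cases N p) as [Hlt|Hge].
  - eapply Rle_trans; [apply Hb|]. eapply Rle_trans; [|apply HX]. apply le_INR; lia.
  - replace N with (p + (N - p))%nat by lia.
    unfold T. rewrite sum_range_split. fold (T p).
    replace (0 + Z.of_nat p)%Z with (0 + Z.of_nat p)%Z by reflexivity.
    rewrite sum_range_shiftg.
    rewrite (sum_range_ext _ (fun m => q * Ef (kap - m))).
    2:{ intros i. rewrite <- Ef_per. f_equal. lia. }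
    rewrite sum_range_scal. fold (T (N - p)).
    assert (H1 := IH (N - p)%nat ltac:(lia)).
    assert (H2 := Hb p).
    assert (q * T (N - p) <= q * (INR p / (1 - q))) by (apply Rmult_le_compat_l; lra).
    assert (INR p + q * (INR p / (1 - q)) = INR p / (1 - q)) by (field; lra).
    lra.
Qed.

Lemma S_back M : S (kap - Z.of_nat (M * p)) = S kap - INR M * psi_omega theta omega p.
Proof.
  induction M.
  - simpl. rewrite Z.sub_0_r. ring.
  - pose proof (S_per theta omega p Hper Hp (kap - Z.of_nat (Datatypes.S M * p))).
    replace (kap - Z.of_nat (Datatypes.S M * p) + Z.of_nat p)%Z with (kap - Z.of_nat (M * p))%Z in H by lia.
    rewrite S_INR. lra.
Qed.

Lemma Ef_far M : Ef (kap - Z.of_nat (M * p)) <= / (1 + lam * (INR M * psi_omega theta omega p)).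
Proof.
  pose proof (psi_pos theta omega p Hinc Hper Hp). pose proof (pos_INR M).
  set (y := lam * (INR M * psi_omega theta omega p)).
  assert (Hy : 0 <= y) by (unfold y; apply Rmult_le_pos; [lra|apply Rmult_le_pos; lra]).
  unfold Ef. rewrite S_back. pose proof Hs.
  apply Rle_trans with (exp (- y)).
  - destruct (Req_dec (- lam * (sst - (S kap - INR M * psi_omega theta omega p))) (- y)) as [E|E];
      [rewrite E; lra|]. left; apply exp_increasing. unfold y. nra.
  - rewrite exp_Ropp. apply Rinv_le_contravar; [lra|]. apply exp_ineq1_le.
Qed.

Lemma core_open : Rabs (z t) <= (Kc / lam + INR p * dm * Kc / (1 - q)) * G.
Proof.
  pose proof q_range as Hq.
  assert (HG : 0 <= G) by (pose proof (Hgj 0); pose proof (Rabs_pos (gj 0)); lra).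
  assert (Hdm : 0 <= dm) by (pose proof (dlt_pos theta p Hinc Hp 0); pose proof (delta_max_ge theta omega p Hper Hp 0); unfold dm; lra).
  pose proof (psi_pos theta omega p Hinc Hper Hp) as Hpsi.
  set (Mt := (Kc / lam + INR p * dm * Kc / (1 - q)) * G).
  destruct (Rle_dec (Rabs (z t)) Mt) as [|Hn]; auto. exfalso.
  set (eps := Rabs (z t) - Mt).
  assert (Heps : 0 < eps) by (unfold eps; lra).
  assert (HB0 : 0 <= B).
  { assert (inT0 theta t) by (exists (kap + 1)%Z; replace (2 * (kap + 1) - 1)%Z with (2 * kap + 1)%Z by lia;
      replace (2 * (kap + 1))%Z with (2 * kap + 2)%Z by lia; lra).
    pose proof (HB t H). pose proof (Rabs_pos (z t)). lra. }
  destruct (INR_archimed (lam * psi_omega theta omega p * eps) (Kc * B)) as [M HM].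
  { apply Rmult_lt_0_compat; [apply Rmult_lt_0_compat|]; lra. }
  pose proof (claim (M * p)) as Hc.
  set (l := (kap + 1 - Z.of_nat (M * p))%Z) in Hc.
  assert (HV : Rabs (V l) <= Kc * Ef (kap - Z.of_nat (M * p)) * B).
  { unfold V. rewrite Rabs_mult.
    pose proof (jump_bound theta p Hinc Hp a lam Kc kap l sst ltac:(lra) Hl HK Hs ltac:(unfold l; lia)) as Hj1.
    replace (l - 1)%Z with (kap - Z.of_nat (M * p))%Z in Hj1 by (unfold l; lia).
    fold (Ef (kap - Z.of_nat (M * p))) in Hj1.
    assert (Hz : Rabs (z (theta (2 * l - 1)%Z)) <= B).
    { apply HB. exists l. pose proof (Hinc (2 * l - 1) (2 * l) ltac:(lia)). lra. }
    replace (l - 1)%Z with (kap - Z.of_nat (M * p))%Z by (unfold l; lia).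
    apply Rmult_le_compat; auto; apply Rabs_pos. }
  pose proof (Ef_far M) as Hf.
  pose proof (Ef_le1 (kap - Z.of_nat (M * p)) ltac:(lia)) as He1.
  pose proof (T_bound (M * p)) as HT.
  set (y := lam * (INR M * psi_omega theta omega p)) in Hf.
  assert (Hy : 0 <= y) by (unfold y; apply Rmult_le_pos; [lra|apply Rmult_le_pos; [apply pos_INR|lra]]).
  assert (H1 : Kc * Ef (kap - Z.of_nat (M * p)) * B < eps).
  { apply Rle_lt_trans with (Kc * B * / (1 + y)).
    - replace (Kc * Ef (kap - Z.of_nat (M * p)) * B) with (Kc * B * Ef (kap - Z.of_nat (M * p))) by ring.
      apply Rmult_le_compat_l; auto. apply Rmult_le_pos; lra.
    - apply (Rmult_lt_reg_r (1 + y)); [lra|]. rewrite Rmult_assoc, Rinv_l, Rmult_1_r by lra.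
      unfold y. nra. }
  assert (H2 : Kc * G / lam * (1 - Ef (kap - Z.of_nat (M * p))) <= Kc * G / lam).
  { assert (0 <= Kc * G / lam) by (unfold Rdiv; apply Rmult_le_pos; [apply Rmult_le_pos; lra|left; apply Rinv_0_lt_compat; lra]).
    nra. }
  assert (H3 : Kc * dm * G * T (M * p) <= Kc * dm * G * (INR p / (1 - q))).
  { apply Rmult_le_compat_l; auto. apply Rmult_le_pos; [apply Rmult_le_pos|]; lra. }
  assert (H4 : Mt = Kc * G / lam + Kc * dm * G * (INR p / (1 - q))) by (unfold Mt; field; lra).
  unfold eps in *. lra.
Qed.

End Core3.


Lemma dw_shift lo hi g t d P :
  deriv_within (lo + P) (hi + P) g (t + P) d -> deriv_within lo hi (fun s => g (s + P)) t d.
Proof.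
  intros H eps Heps. destruct (H eps Heps) as [del [Hdel H1]]. exists del; split; auto.
  intros h Hh Hhd Hr. specialize (H1 h Hh Hhd ltac:(lra)).
  replace (t + h + P) with (t + P + h) by ring. exact H1.
Qed.

Lemma dw_minus lo hi g1 g2 t d1 d2 :
  deriv_within lo hi g1 t d1 -> deriv_within lo hi g2 t d2 ->
  deriv_within lo hi (fun s => g1 s - g2 s) t (d1 - d2).
Proof.
  intros H1 H2 eps Heps.
  destruct (H1 (eps/2) ltac:(lra)) as [del1 [Hd1 K1]].
  destruct (H2 (eps/2) ltac:(lra)) as [del2 [Hd2 K2]].
  exists (Rmin del1 del2); split; [apply Rmin_pos; auto|].
  intros h Hh Hhd Hr.
  pose proof (Rmin_l del1 del2). pose proof (Rmin_r del1 del2).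
  specialize (K1 h Hh ltac:(lra) Hr). specialize (K2 h Hh ltac:(lra) Hr).
  replace ((g1 (t + h) - g2 (t + h) - (g1 t - g2 t)) / h - (d1 - d2))
    with (((g1 (t + h) - g1 t) / h - d1) - ((g2 (t + h) - g2 t) / h - d2)) by (field; auto).
  eapply Rle_lt_trans; [apply Rabs_triang|]. rewrite Rabs_Ropp. lra.
Qed.

Section CA.
Variable theta : Z -> R.
Variable omega : R.
Variable p : nat.
Hypothesis Hinc : forall k1 k2 : Z, (k1 < k2)%Z -> theta k1 < theta k2.
Hypothesis Hper : forall k : Z, theta (k + 2 * Z.of_nat p)%Z = theta k + omega.
Hypothesis Hp : (1 <= p)%nat.
Variables (a lam Kc G B : R) (z gc : R -> R) (gj : Z -> R).
Hypothesis Ha : 0 < a.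
Hypothesis Hl : 0 < lam.
Hypothesis HK : K_bound theta a lam Kc.
Hypothesis HKc : 0 < Kc.
Hypothesis Hd : forall k t, theta (2 * k - 1)%Z <= t <= theta (2 * k)%Z ->
  deriv_within (theta (2 * k - 1)%Z) (theta (2 * k)%Z) z t (- a * z t + gc t).
Hypothesis Hg : forall k t, theta (2 * k - 1)%Z <= t <= theta (2 * k)%Z -> Rabs (gc t) <= G.
Hypothesis Hj : forall k, z (theta (2 * k + 1)%Z) = (1 - dlt theta k * a) * z (theta (2 * k)%Z) + dlt theta k * gj k.
Hypothesis Hgj : forall k, Rabs (gj k) <= G.
Hypothesis HB : forall t, inT0 theta t -> Rabs (z t) <= B.

Lemma core_all t : inT0 theta t ->
  Rabs (z t) <= (Kc / lam + INR p * delta_max theta p * Kc / (1 - exp (- lam * psi_omega theta omega p))) * G.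
Proof.
  intros [k Hk].
  set (Mt := (Kc / lam + INR p * delta_max theta p * Kc / (1 - exp (- lam * psi_omega theta omega p))) * G).
  assert (Hin : forall r, theta (2 * k - 1)%Z < r <= theta (2 * k)%Z -> Rabs (z r) <= Mt).
  { intros r Hr. unfold Mt.
    apply (core_open theta omega p Hinc Hper Hp a lam Kc G B z gc gj Ha Hl HK HKc Hd Hg Hj Hgj HB (k - 1)).
    replace (2 * (k - 1) + 1)%Z with (2 * k - 1)%Z by lia.
    replace (2 * (k - 1) + 2)%Z with (2 * k)%Z by lia. auto. }
  destruct (Req_dec t (theta (2 * k - 1)%Z)) as [E|E]; [|apply Hin; lra].
  subst t. set (lo := theta (2 * k - 1)%Z) in *. set (hi := theta (2 * k)%Z) in *.
  assert (Hlh : lo < hi) by (unfold lo, hi; apply Hinc; lia).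
  destruct (Rle_dec (Rabs (z lo)) Mt) as [|Hn]; auto. exfalso.
  assert (Hdk := Hd k lo ltac:(unfold lo, hi in *; lra)).
  pose proof (dw_cont lo hi z lo _ ltac:(lra) Hdk) as Hc.
  destruct (Hc (Rabs (z lo) - Mt) ltac:(lra)) as [al [Hal Hx]].
  set (r := lo + Rmin (al / 2) (hi - lo)).
  assert (Hr1 : 0 < Rmin (al / 2) (hi - lo)) by (apply Rmin_pos; lra).
  pose proof (Rmin_l (al / 2) (hi - lo)). pose proof (Rmin_r (al / 2) (hi - lo)).
  specialize (Hx r). simpl in Hx. unfold D_x, no_cond, R_dist in Hx.
  rewrite (clamp_id lo hi lo) in Hx by lra. rewrite (clamp_id lo hi r) in Hx by (unfold r; lra).
  assert (Hx' : Rabs (z r - z lo) < Rabs (z lo) - Mt).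
  { apply Hx. split; [split; [auto|unfold r; lra]|]. unfold r.
    replace (lo + Rmin (al / 2) (hi - lo) - lo) with (Rmin (al / 2) (hi - lo)) by ring.
    rewrite Rabs_pos_eq; lra. }
  pose proof (Hin r ltac:(unfold r; lra)).
  pose proof (Rabs_triang_inv (z lo) (z r)). rewrite <- Rabs_Ropp in Hx'.
  replace (- (z r - z lo)) with (z lo - z r) in Hx' by ring. lra.
Qed.
End CA.


Lemma In_idx m n h l : In (h, l) (idx m n) <-> valid m n h l.
Proof.
  unfold idx, valid. rewrite in_prod_iff, !in_seq. lia.
Qed.

Lemma fold_max_ge d L x : In x L -> x <= fold_right Rmax d L.
Proof.
  induction L; simpl; [tauto|]. intros [E|H].
  - subst; apply Rmax_l.
  - eapply Rle_trans; [apply IHL; auto|apply Rmax_r].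
Qed.

Lemma fold_min_le d L x : In x L -> fold_right Rmin d L <= x.
Proof.
  induction L; simpl; [tauto|]. intros [E|H].
  - subst; apply Rmin_l.
  - eapply Rle_trans; [apply Rmin_r|apply IHL; auto].
Qed.

Lemma maxij_ge m n g i j : valid m n i j -> g i j <= maxij m n g.
Proof.
  intros H. unfold maxij. apply fold_max_ge.
  change (g i j) with ((fun ij => g (fst ij) (snd ij)) (i, j)).
  apply in_map. apply In_idx; auto.
Qed.

Lemma minij_le m n g i j : valid m n i j -> minij m n g <= g i j.
Proof.
  intros H. unfold minij. apply fold_min_le.
  change (g i j) with ((fun ij => g (fst ij) (snd ij)) (i, j)).
  apply in_map. apply In_idx; auto.
Qed.

Lemma vnorm_ge m n v i j : valid m n i j -> Rabs (v i j) <= vnorm m n v.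
Proof. intros H. unfold vnorm. apply (maxij_ge m n (fun i j => Rabs (v i j))); auto. Qed.

Lemma sumL_lip (L : list (nat * nat)) (F1 F2 Hb : nat * nat -> R) :
  (forall x, In x L -> Rabs (F1 x - F2 x) <= Hb x) ->
  Rabs (fold_right Rplus 0 (map F1 L) - fold_right Rplus 0 (map F2 L)) <= fold_right Rplus 0 (map Hb L).
Proof.
  induction L; simpl; intros H.
  - rewrite Rminus_diag, Rabs_R0; lra.
  - replace (F1 a + fold_right Rplus 0 (map F1 L) - (F2 a + fold_right Rplus 0 (map F2 L)))
      with ((F1 a - F2 a) + (fold_right Rplus 0 (map F1 L) - fold_right Rplus 0 (map F2 L))) by ring.
    eapply Rle_trans; [apply Rabs_triang|].
    apply Rplus_le_compat; auto.
Qed.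

Lemma sumL_scal (L : list (nat * nat)) (F : nat * nat -> R) c :
  fold_right Rplus 0 (map (fun x => F x * c) L) = fold_right Rplus 0 (map F L) * c.
Proof. induction L; simpl; [ring|]. rewrite IHL; ring. Qed.

Lemma lip m n r i j (C : nat -> nat -> nat -> nat -> R) (f : R -> R) Mf Lf H0 Bd (u v : vec) :
  valid m n i j ->
  (forall h l, valid m n i j -> valid m n h l -> 0 <= C i j h l) ->
  (forall s, Rabs (f s) <= Mf) ->
  (forall s1 s2, Rabs (f s1 - f s2) <= Lf * Rabs (s1 - s2)) -> 0 <= Lf ->
  (forall h l, valid m n h l -> Rabs (u h l) <= H0 /\ Rabs (v h l) <= H0 /\ Rabs (u h l - v h l) <= Bd) ->
  Rabs (sumN m n r i j (fun h l => C i j h l * f (v h l) * v i j)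
        - sumN m n r i j (fun h l => C i j h l * f (u h l) * u i j))
  <= (Mf + H0 * Lf) * sumN m n r i j (fun h l => C i j h l) * Bd.
Proof.
  intros Hv HC Hf HL HLf Hb. unfold sumN.
  match goal with |- _ <= ?A * ?S * ?B => replace (A * S * B) with (S * (A * B)) by ring end.
  rewrite <- sumL_scal.
  apply sumL_lip. intros [h l] Hin. simpl.
  apply filter_In in Hin. destruct Hin as [Hin _]. apply In_idx in Hin.
  destruct (Hb h l Hin) as [Hu1 [Hv1 Hd1]].
  destruct (Hb i j Hv) as [Hu2 [Hv2 Hd2]].
  specialize (HC h l Hv Hin).
  replace (C i j h l * f (v h l) * v i j - C i j h l * f (u h l) * u i j)
    with (C i j h l * (f (v h l) * (v i j - u i j) + (f (v h l) - f (u h l)) * u i j)) by ring.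
  rewrite Rabs_mult, (Rabs_pos_eq (C i j h l)) by auto.
  apply Rmult_le_compat_l; auto.
  eapply Rle_trans; [apply Rabs_triang|]. rewrite !Rabs_mult.
  pose proof (Hf (v h l)). pose proof (HL (v h l) (u h l)).
  rewrite <- Rabs_Ropp in Hd2. replace (- (u i j - v i j)) with (v i j - u i j) in Hd2 by ring.
  rewrite <- Rabs_Ropp in Hd1. replace (- (u h l - v h l)) with (v h l - u h l) in Hd1 by ring.
  pose proof (Rabs_pos (f (v h l))). pose proof (Rabs_pos (v i j - u i j)).
  pose proof (Rabs_pos (f (v h l) - f (u h l))). pose proof (Rabs_pos (u i j)).
  pose proof (Rabs_pos (v h l - u h l)).
  assert (Rabs (f (v h l)) * Rabs (v i j - u i j) <= Mf * Bd) by (apply Rmult_le_compat; auto).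
  assert (Rabs (f (v h l) - f (u h l)) * Rabs (u i j) <= (Lf * Bd) * H0).
  { apply Rmult_le_compat; auto. eapply Rle_trans; [eauto|]. apply Rmult_le_compat_l; auto. }
  nra.
Qed.


Theorem mainTheorem5
  (m n r : nat) (a : nat -> nat -> R) (C : nat -> nat -> nat -> nat -> R) (f : R -> R)
  (theta : Z -> R) (omega : R) (p : nat)
  (Lambda : vec -> Prop) (F : vec -> vec) (MF : R)
  (K : nat -> nat -> R) (Mf Lf : R)
  (zeta : Z -> vec) (q0 : nat) (x : R -> vec) :
  (1 <= m)%nat -> (1 <= n)%nat ->
  (forall i j, valid m n i j -> 0 < a i j) ->
  (forall i j h l, valid m n i j -> valid m n h l -> 0 <= C i j h l) ->
  continuity f ->
  (forall k1 k2 : Z, (k1 < k2)%Z -> theta k1 < theta k2) ->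
  theta (-1)%Z < 0 < theta 0%Z ->
  0 < omega -> (1 <= p)%nat ->
  (forall k : Z, theta (k + 2 * Z.of_nat p)%Z = theta k + omega) ->
  vcompact m n Lambda ->
  (forall v, Lambda v -> Lambda (F v)) ->
  vcont_on m n Lambda F ->
  (exists v, Lambda v /\ vnorm m n (F v) = MF) ->
  (forall v, Lambda v -> vnorm m n (F v) <= MF) ->
  (forall k : Z, Lambda (zeta k)) ->
  (forall (k : Z) i j, valid m n i j -> zeta (k + 1)%Z i j = F (zeta k) i j) ->
  (forall i j (k : Z), valid m n i j -> dlt theta k * a i j <> 1) ->
  0 < minij m n (lamij theta omega p a) ->
  0 < Mf -> (forall s, Rabs (f s) <= Mf) ->
  0 < Lf -> (forall s1 s2, Rabs (f s1 - f s2) <= Lf * Rabs (s1 - s2)) ->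
  (forall i j, valid m n i j -> 0 < K i j) ->
  (forall i j, valid m n i j -> K_bound theta (a i j) (lamij theta omega p a i j) (K i j)) ->
  (Mf + H0 m n r theta omega p a C K Mf MF * Lf) * cbar m n r theta omega p a C K < 1 ->
  (1 <= q0)%nat ->
  (forall (k : Z) i j, valid m n i j -> zeta (k + Z.of_nat q0)%Z i j = zeta k i j) ->
  is_solution m n r a C f theta zeta x ->
  (forall t, inT0 theta t -> vnorm m n (x t) <= H0 m n r theta omega p a C K Mf MF) ->
  forall t, inT0 theta t ->
    forall i j, valid m n i j ->
      x (t + INR (Nat.lcm q0 p / p) * omega) i j = x t i j.
Proof.
  intros Hm Hn Ha HC Hfc Hinc Hth0 Hom Hp Hper _ _ _ _ _ _ _ _ Hlam HMf Hf HLf HL HK HKb HC5 Hq0 Hzp Hsol Hx.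
  set (H0v := H0 m n r theta omega p a C K Mf MF) in *.
  set (cb := cbar m n r theta omega p a C K) in *.
  set (N0 := (Nat.lcm q0 p / p)%nat).
  set (P := INR N0 * omega).
  assert (HN0 : exists c, (N0 * p = c * q0)%nat).
  { destruct (Nat.divide_lcm_r q0 p) as [c1 Hc1].
    destruct (Nat.divide_lcm_l q0 p) as [c2 Hc2].
    exists c2. unfold N0. rewrite Hc1, Nat.div_mul by lia. lia. }
  set (Np := Z.of_nat (N0 * p)).
  assert (Hth : forall k, theta (k + 2 * Np)%Z = theta k + P).
  { assert (Gen : forall M k, theta (k + 2 * Z.of_nat (M * p))%Z = theta k + INR M * omega).
    { induction M as [|M IH]; intros k.
    - simpl. rewrite Z.add_0_r. ring.
    - replace (k + 2 * Z.of_nat (Datatypes.S M * p))%Z with ((k + 2 * Z.of_nat (M * p)) + 2 * Z.of_nat p)%Z by lia.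
      rewrite Hper, IH, S_INR. ring. }
    intros k. apply Gen. }
  assert (Hzz : forall k i j, valid m n i j -> zeta (k + Np)%Z i j = zeta k i j).
  { intros k i j Hv. destruct HN0 as [c Hc]. unfold Np. rewrite Hc.
    clear Hc. induction c as [|c IH].
    - simpl. rewrite Z.add_0_r. auto.
    - replace (k + Z.of_nat (Datatypes.S c * q0))%Z with ((k + Z.of_nat (c * q0)) + Z.of_nat q0)%Z by lia.
      rewrite Hzp; auto. }
  assert (Hdl : forall k, dlt theta (k + Np)%Z = dlt theta k).
  { intros k. unfold Np. rewrite <- (dlt_per_mult theta omega p Hper Hp k (Z.of_nat N0)). f_equal. lia. }
  assert (HT0 : forall t, inT0 theta t -> inT0 theta (t + P)).
  { intros t [k Hk]. exists (k + Np)%Z.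
    replace (2 * (k + Np) - 1)%Z with ((2 * k - 1) + 2 * Np)%Z by lia.
    replace (2 * (k + Np))%Z with ((2 * k) + 2 * Np)%Z by lia.
    rewrite !Hth. lra. }
  assert (Hv11 : valid m n 1 1) by (unfold valid; lia).
  assert (HH0 : 0 <= H0v).
  { assert (inT0 theta (theta 0%Z)) by (exists 0%Z; simpl; pose proof (Hinc (-1)%Z 0%Z ltac:(lia)); lra).
    pose proof (Hx _ H). pose proof (vnorm_ge m n (x (theta 0%Z)) 1 1 Hv11). pose proof (Rabs_pos (x (theta 0%Z) 1%nat 1%nat)). lra. }
  assert (Hxb : forall t i j, inT0 theta t -> valid m n i j -> Rabs (x t i j) <= H0v).
  { intros t i j Ht Hv. eapply Rle_trans; [apply (vnorm_ge m n (x t) i j Hv)|]. apply Hx; auto. }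
  set (c := (Mf + H0v * Lf) * cb).
  assert (Claim : forall N t i j, inT0 theta t -> valid m n i j ->
             Rabs (x t i j - x (t + P) i j) <= c ^ N * (2 * H0v)).
  { induction N as [|N IH]; intros t i j Ht Hv.
    - simpl. pose proof (Hxb t i j Ht Hv). pose proof (Hxb (t + P) i j (HT0 t Ht) Hv).
      eapply Rle_trans; [apply Rabs_triang|]. rewrite Rabs_Ropp. lra.
    - set (Bd := c ^ N * (2 * H0v)).
      assert (HBd : 0 <= Bd) by (pose proof (IH t i j Ht Hv); pose proof (Rabs_pos (x t i j - x (t + P) i j)); unfold Bd; lra).
      set (SC := sumN m n r i j (fun h l => C i j h l)).
      set (gcf := fun s => sumN m n r i j (fun h l => C i j h l * f (x (s + P) h l) * x (s + P) i j)
                          - sumN m n r i j (fun h l => C i j h l * f (x s h l) * x s i j)).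
      set (z := fun s => x s i j - x (s + P) i j).
      set (G := (Mf + H0v * Lf) * SC * Bd).
      assert (Hgb : forall s, inT0 theta s -> Rabs (gcf s) <= G).
      { intros s Hs. unfold gcf, G, SC. apply lip; auto; try lra. }
      assert (Hlij : 0 < lamij theta omega p a i j).
      { eapply Rlt_le_trans; [apply Hlam|]. apply (minij_le m n (lamij theta omega p a)); auto. }
      assert (Hcore := core_all theta omega p Hinc Hper Hp (a i j) (lamij theta omega p a i j) (K i j) G Bd
                 z gcf (fun k => gcf (theta (2 * k)%Z)) (Ha i j Hv) Hlij (HKb i j Hv) (HK i j Hv)).
      assert (Hbound : Rabs (z t) <= Kfac theta omega p a K i j * G).
      { unfold Kfac. apply Hcore; auto.
        - intros k s Hs.
          destruct (Hsol k i j Hv) as [Hd1 _]. destruct (Hsol (k + Np)%Z i j Hv) as [Hd2 _].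
          specialize (Hd1 s Hs).
          replace (2 * (k + Np) - 1)%Z with ((2 * k - 1) + 2 * Np)%Z in Hd2 by lia.
          replace (2 * (k + Np))%Z with ((2 * k) + 2 * Np)%Z in Hd2 by lia.
          rewrite !Hth in Hd2. specialize (Hd2 (s + P) ltac:(lra)).
          apply dw_shift in Hd2.
          pose proof (dw_minus _ _ _ _ _ _ _ Hd1 Hd2) as Hd3.
          rewrite (Hzz k i j Hv) in Hd3.
          unfold z, gcf.
          replace (- a i j * (x s i j - x (s + P) i j) +
                   (sumN m n r i j (fun h l => C i j h l * f (x (s + P) h l) * x (s + P) i j) -
                    sumN m n r i j (fun h l => C i j h l * f (x s h l) * x s i j)))
            with (- a i j * x s i j - sumN m n r i j (fun h l => C i j h l * f (x s h l) * x s i j) + zeta k i j -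
                  (- a i j * x (s + P) i j - sumN m n r i j (fun h l => C i j h l * f (x (s + P) h l) * x (s + P) i j) + zeta k i j)) by ring.
          exact Hd3.
        - intros k s Hs. apply Hgb. exists k; auto.
        - intros k. destruct (Hsol k i j Hv) as [_ Hj1]. destruct (Hsol (k + Np)%Z i j Hv) as [_ Hj2].
          replace (2 * (k + Np) + 1)%Z with ((2 * k + 1) + 2 * Np)%Z in Hj2 by lia.
          replace (2 * (k + Np))%Z with ((2 * k) + 2 * Np)%Z in Hj2 by lia.
          rewrite !Hth, Hdl, (Hzz k i j Hv) in Hj2.
          unfold z, gcf. rewrite Hj1, Hj2. ring.
        - intros k. apply Hgb. exists k. pose proof (Hinc (2 * k - 1)%Z (2 * k)%Z ltac:(lia)). lra.
        - intros s Hs. apply IH; auto. }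
      assert (HKS : Kfac theta omega p a K i j * SC <= cb).
      { unfold cb, cbar, SC. apply (maxij_ge m n (fun i j => Kfac theta omega p a K i j * sumN m n r i j (fun h l => C i j h l))); auto. }
      assert (HMB : 0 <= (Mf + H0v * Lf) * Bd) by (apply Rmult_le_pos; [nra|auto]).
      unfold z in Hbound.
      replace (c ^ Datatypes.S N * (2 * H0v)) with (cb * ((Mf + H0v * Lf) * Bd)) by (unfold Bd, c; simpl; ring).
      eapply Rle_trans; [apply Hbound|].
      unfold G. replace (Kfac theta omega p a K i j * ((Mf + H0v * Lf) * SC * Bd))
        with ((Kfac theta omega p a K i j * SC) * ((Mf + H0v * Lf) * Bd)) by ring.
      apply Rmult_le_compat_r; auto. }
  intros t Ht i j Hv.
  fold N0. fold P.
  assert (Hz0 : Rabs (x t i j - x (t + P) i j) = 0).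
  { pose proof (Rabs_pos (x t i j - x (t + P) i j)) as Hpos.
    destruct (Rle_dec c 0) as [Hc|Hc].
    - pose proof (Claim 1%nat t i j Ht Hv). simpl in H. nra.
    - destruct (Req_dec (Rabs (x t i j - x (t + P) i j)) 0) as [E|E]; auto. exfalso.
      assert (Hc1 : Rabs c < 1) by (rewrite Rabs_pos_eq; unfold c, cb in *; lra).
      destruct (pow_lt_1_zero c Hc1 (Rabs (x t i j - x (t + P) i j) / (2 * H0v + 1))) as [N HN].
      { apply Rdiv_lt_0_compat; lra. }
      specialize (HN N (Nat.le_refl N)). pose proof (Claim N t i j Ht Hv).
      rewrite Rabs_pos_eq in HN by (apply pow_le; lra).
      set (w := Rabs (x t i j - x (t + P) i j)) in *.
      assert (c ^ N * (2 * H0v) <= w / (2 * H0v + 1) * (2 * H0v)) by (apply Rmult_le_compat_r; lra).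
      assert (w / (2 * H0v + 1) * (2 * H0v) < w).
      { apply (Rmult_lt_reg_r (2 * H0v + 1)); [lra|].
        replace (w / (2 * H0v + 1) * (2 * H0v) * (2 * H0v + 1)) with (w * (2 * H0v)) by (field; lra). nra. }
      lra. }
  destruct (Req_dec (x t i j - x (t + P) i j) 0) as [E|E]; [lra|]. exfalso. apply (Rabs_no_R0 _ E Hz0).
Qed.
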